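(* In the setting of the Theorem of Sect. 3.4 (solution $\{\tau_{m,n}\}$ of the lattice $q$-UC hierarchy with $I=\{1,2\}$, $J=\{-1,-2\}$, homogeneous with exponents $d_{m,n}$), assume moreover $\tau_{m+2,n}=\tau_{m,n+2}=\tau_{m,n}$ and $d_{m+2,n}=d_{m,n+2}=d_{m,n}$. Put $f=f_{1,1}$, $g=g_{1,2}$. Then, with $T=T_1T_2$, $\overline F=T(F)$, the evolution closes on $(f,g)$: $$\overline f=\frac{c_{1,1}}{f}\cdot\frac{(\alpha g-1)(g-c_{1,2}\beta)}{(g-\alpha)(\beta g-c_{1,2})},\qquad \overline g=\frac{c_{1,2}}{g}\cdot\frac{(q\gamma\overline f-1)(\overline f-c_{1,1}\delta)}{(\overline f-q\gamma)(\delta\overline f-c_{1,1})},$$ where $(\overline\alpha,\overline\beta,\overline\gamma,\overline\delta)=(q\alpha,\beta/q,q\gamma,\delta/q)$ and $\alpha\delta/(\beta\gamma)=1$ (the $q$-analogue of the sixth Painlevé equation).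
   Context: $q\in\mathbb C^*$, $\boldsymbol t=(t_1,t_2,t_{-1},t_{-2})$; $T_k(t_k)=qt_k$ ($k=1,2$), $T_k(t_k)=q^{-1}t_k$ ($k=-1,-2$), $T_k(t_l)=t_l$ ($l\ne k$); $F^{(i_1,\dots,i_r)}=T_{i_1}\cdots T_{i_r}(F)$. The lattice $q$-UC hierarchy: $t_iT_i(\tau_{m,n+1})T_j(\tau_{m+1,n})-t_jT_j(\tau_{m,n+1})T_i(\tau_{m+1,n})=(t_i-t_j)T_iT_j(\tau_{m,n})\tau_{m+1,n+1}$ for all $i,j\in\{1,2,-1,-2\}$, $(m,n)\in\mathbb Z^2$, with $\tau_{m,n}$ nowhere vanishing and $\tau_{m,n}(q\boldsymbol t)=q^{d_{m,n}}\tau_{m,n}(\boldsymbol t)$, $d_{m,n}+d_{m+1,n+1}=d_{m,n+1}+d_{m+1,n}$. Definitions: $w_{m,n}=\tau_{m+1,n}/\tau_{m,n+1}$, $c_{m,n}=q^{d_{m+1,n}-d_{m,n+1}}$, $f_{m,n}=w^{(1)}_{m,n}/w^{(-1)}_{m,n}$, $g_{m,n}=w^{(1,-1)}_{m,n}/w^{(-1,-2)}_{m,n}$, $\alpha=t_1/t_{-2}$, $\beta=t_{-1}/t_2$, $\gamma=t_1/t_{-1}$, $\delta=t_{-2}/t_2$. *)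

(* Defs.v *)
From HB Require Import structures.
From mathcomp Require Import all_boot all_order all_algebra.
Set Implicit Arguments. Unset Strict Implicit. Unset Printing Implicit Defensive.
Import Order.TTheory GRing.Theory Num.Theory.
Local Open Scope ring_scope.

Inductive dir := d1 | d2 | dm1 | dm2.

Definition dir_eqb (k l : dir) : bool :=
  match k, l with
  | d1, d1 | d2, d2 | dm1, dm1 | dm2, dm2 => true
  | _, _ => false
  end.

Section Defs.
Variable K : numClosedFieldType.

Definition admissible (t : dir -> K) : Prop := forall k, t k != 0.

Definition Tsh (q : K) (k : dir) (t : dir -> K) : dir -> K :=
  fun l => if dir_eqb k l then
             (match k with d1 | d2 => q | _ => q^-1 end) * t l
           else t l.

Definition qscale (q : K) (t : dir -> K) : dir -> K := fun l => q * t l.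

Definition quc_eq (q : K) (tau : int -> int -> (dir -> K) -> K)
  (i j : dir) (m n : int) (t : dir -> K) : Prop :=
  t i * tau m (n + 1) (Tsh q i t) * tau (m + 1) n (Tsh q j t)
  - t j * tau m (n + 1) (Tsh q j t) * tau (m + 1) n (Tsh q i t)
  = (t i - t j) * tau m n (Tsh q i (Tsh q j t)) * tau (m + 1) (n + 1) t.

Definition wf (tau : int -> int -> (dir -> K) -> K) (m n : int) (t : dir -> K) : K :=
  tau (m + 1) n t / tau m (n + 1) t.

Definition cc (q : K) (d : int -> int -> int) (m n : int) : K :=
  q ^ (d (m + 1) n - d m (n + 1)).

Definition ff (q : K) tau (m n : int) (t : dir -> K) : K :=
  wf tau m n (Tsh q d1 t) / wf tau m n (Tsh q dm1 t).

Definition gf (q : K) tau (m n : int) (t : dir -> K) : K :=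
  wf tau m n (Tsh q dm1 (Tsh q d1 t)) / wf tau m n (Tsh q dm2 (Tsh q dm1 t)).

Definition Tbar (q : K) (t : dir -> K) : dir -> K := Tsh q d2 (Tsh q d1 t).

Definition alpha (t : dir -> K) : K := t d1 / t dm2.
Definition beta  (t : dir -> K) : K := t dm1 / t d2.
Definition gamma (t : dir -> K) : K := t d1 / t dm1.
Definition delta (t : dir -> K) : K := t dm2 / t d2.

End Defs.

(* Main.v *)
Require Import Defs.
From HB Require Import structures.
From mathcomp Require Import all_boot all_order all_algebra.
Import Order.TTheory GRing.Theory Num.Theory.
Local Open Scope ring_scope.
From mathcomp Require Import ring.
From Stdlib Require Import FunctionalExtensionality.


Lemma algE (F : fieldType) (ti tj A B C D E Fv G H : F) :
  A != 0 -> C != 0 -> E != 0 -> H != 0 ->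
  ti*A*B - tj*C*D = (ti - tj)*E*Fv ->
  ti*D*C - tj*B*A = (ti - tj)*G*H ->
  Fv/H * (ti*(D/A) - tj*(B/C)) = G/E * (ti*(B/C) - tj*(D/A)).
Proof.
move=> hA hC hE hH e1 e2.
have key : Fv*E*(ti*D*C - tj*B*A) = G*H*(ti*A*B - tj*C*D).
  by rewrite e1 e2; ring.
transitivity (Fv*E*(ti*D*C - tj*B*A) / (H*E*A*C)).
  by field; rewrite ?hA ?hC ?hE ?hH.
rewrite key; field; by rewrite ?hA ?hC ?hE ?hH.
Qed.

Lemma alg1 (F : fieldType) (t1 t2 tm1 tm2 c11 c12 x1 xm u v G1 G2 : F) :
  t1 != 0 -> t2 != 0 -> tm1 != 0 -> tm2 != 0 -> c11 != 0 -> c12 != 0 ->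
  x1 != 0 -> xm != 0 -> u != 0 -> v != 0 -> G1 != 0 -> G2 != 0 ->
  xm * (t1 * G1 - tm2 * G2) = u * (t1 * G2 - tm2 * G1) ->
  x1 * (t2 * (c12 * G2) - tm1 * G1) = (c11 * v) * (t2 * G1 - tm1 * (c12 * G2)) ->
  (G1/G2 - t1/tm2) * (tm1/t2 * (G1/G2) - c12) != 0 ->
  u / v = c11 / (x1/xm) * ((t1/tm2 * (G1/G2) - 1) * (G1/G2 - c12 * (tm1/t2))
             / ((G1/G2 - t1/tm2) * (tm1/t2 * (G1/G2) - c12))).
Proof.
move=> h1 h2 h3 h4 h5 h6 h7 h8 h9 h10 h11 h12 R1 R2 H.
have [Ha Hb] : (G1/G2 - t1/tm2 != 0) /\ (tm1/t2 * (G1/G2) - c12 != 0).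
  by apply/andP; rewrite -negb_or -mulf_eq0.
have D1 : t1*G2 - tm2*G1 != 0.
  apply: contraNneq Ha => e.
  have -> : G1/G2 - t1/tm2 = -(t1*G2 - tm2*G1)/(G2*tm2) by field; rewrite ?h12 ?h4.
  by rewrite e oppr0 mul0r.
have N2 : t2 * (c12 * G2) - tm1 * G1 != 0.
  apply: contraNneq Hb => e.
  have -> : tm1/t2 * (G1/G2) - c12 = -(t2 * (c12 * G2) - tm1 * G1)/(t2*G2) by field; rewrite ?h12 ?h2.
  by rewrite e oppr0 mul0r.
have D2 : t2 * G1 - tm1 * (c12 * G2) != 0.
  apply: contraNneq N2 => e.
  have : x1 * (t2 * (c12 * G2) - tm1 * G1) = 0 by rewrite R2 e mulr0.
  by move/eqP; rewrite mulf_eq0 (negbTE h7).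
have eu : u = xm * (t1 * G1 - tm2 * G2) / (t1 * G2 - tm2 * G1).
  by rewrite R1; field; rewrite D1.
have ev : v = x1 * (t2 * (c12 * G2) - tm1 * G1) / (c11 * (t2 * G1 - tm1 * (c12 * G2))).
  by rewrite R2; field; rewrite ?D2 ?h5.
have N2' : tm1 * G1 + - c12 * (t2 * G2) != 0.
  have -> : tm1 * G1 + - c12 * (t2 * G2) = -(t2 * (c12 * G2) - tm1 * G1) by ring.
  by rewrite oppr_eq0.
have D1' : G1 * tm2 + - t1 * G2 != 0.
  have -> : G1 * tm2 + - t1 * G2 = -(t1*G2 - tm2*G1) by ring.
  by rewrite oppr_eq0.
rewrite eu ev; field.
by rewrite ?N2' ?D1'  ?D1 ?D2 ?N2 ?Ha ?Hb ?h1 ?h2 ?h3 ?h4 ?h5 ?h6 ?h7 ?h8 ?h9 ?h10 ?h11 ?h12.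
Qed.

Lemma alg2 (F : fieldType) (q t1 t2 tm1 tm2 c11 c12 u v G1 G2 P Qy : F) :
  q != 0 -> t1 != 0 -> t2 != 0 -> tm1 != 0 -> tm2 != 0 -> c11 != 0 -> c12 != 0 ->
  u != 0 -> v != 0 -> G1 != 0 -> G2 != 0 -> P != 0 -> Qy != 0 ->
  G2 * (t1 * u - q^-1 * tm1 * v) = P * (t1 * v - q^-1 * tm1 * u) ->
  G1 * (t2 * (c11 * v) - tm2 * u) = (c12 * Qy) * (t2 * u - tm2 * (c11 * v)) ->
  (u/v - q * (t1/tm1)) * (tm2/t2 * (u/v) - c11) != 0 ->
  P/Qy = c12 / (G1/G2) * ((q * (t1/tm1) * (u/v) - 1) * (u/v - c11 * (tm2/t2))
      / ((u/v - q*(t1/tm1)) * (tm2/t2*(u/v) - c11))).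
Proof.
move=> h0 h1 h2 h3 h4 h5 h6 h7 h8 h9 h10 h11 h12 R3 R4 H.
have [Ha Hb] : (u/v - q * (t1/tm1) != 0) /\ (tm2/t2 * (u/v) - c11 != 0).
  by apply/andP; rewrite -negb_or -mulf_eq0.
have D3 : t1*v - q^-1*tm1*u != 0.
  apply: contraNneq Ha => e.
  have -> : u/v - q * (t1/tm1) = - q*(t1*v - q^-1*tm1*u)/(v*tm1) by field; rewrite ?h0 ?h8 ?h3.
  by rewrite e mulr0 mul0r.
have D3' : t1 * v * q - tm1 * u != 0.
  have -> : t1 * v * q - tm1 * u = q * (t1*v - q^-1*tm1*u) by field.
  by rewrite mulf_neq0.
have N4 : t2*(c11*v) - tm2*u != 0.
  apply: contraNneq Hb => e.
  have -> : tm2/t2*(u/v) - c11 = -(t2*(c11*v) - tm2*u)/(t2*v) by field; rewrite ?h2 ?h8.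
  by rewrite e oppr0 mul0r.
have D4 : t2*u - tm2*(c11*v) != 0.
  apply: contraNneq N4 => e.
  have : G1 * (t2 * (c11 * v) - tm2 * u) = 0 by rewrite R4 e mulr0.
  by move/eqP; rewrite mulf_eq0 (negbTE h9).
have eP : P = G2*(t1*u - q^-1*tm1*v)/(t1*v - q^-1*tm1*u).
  by rewrite R3; field; rewrite ?h0 ?D3'.
have eQ : Qy = G1 * (t2*(c11*v) - tm2*u)/(c12 * (t2*u - tm2*(c11*v))).
  by rewrite R4; field; rewrite ?D4 ?h6.
have N4' : tm2 * u + - c11 * (t2 * v) != 0.
  have -> : tm2 * u + - c11 * (t2 * v) = -(t2*(c11*v) - tm2*u) by ring.
  by rewrite oppr_eq0.
have D3'' : u * tm1 + - (q * t1) * v != 0.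
  have -> : u * tm1 + - (q * t1) * v = -(t1 * v * q - tm1 * u) by ring.
  by rewrite oppr_eq0.
rewrite eP eQ; field.
by rewrite ?N4' ?D3'' ?D3' ?D4 ?N4 ?h0 ?h1 ?h2 ?h3 ?h4 ?h5 ?h6 ?h7 ?h8 ?h9 ?h10 ?h11 ?h12.
Qed.

Lemma Tsh_adm (K : numClosedFieldType) (q : K) k t :
  q != 0 -> admissible t -> admissible (Tsh q k t).
Proof.
move=> hq ht l; rewrite /Tsh; case: (dir_eqb k l); last exact: ht.
by apply: mulf_neq0 => //; case: k => //; rewrite invr_eq0.
Qed.

Arguments Tsh_adm {K q} k {t}.

Lemma E1 (K : numClosedFieldType) (q : K) (tau : int -> int -> (dir -> K) -> K) :
  q != 0 ->
  (forall m n t, admissible t -> tau m n t != 0) ->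
  (forall i j m n t, admissible t -> quc_eq q tau i j m n t) ->
  (forall m n t, admissible t ->
     tau (m + 2) n t = tau m n t /\ tau m (n + 2) t = tau m n t) ->
  forall i j s, admissible s ->
  wf tau 1 2 s * (s i * wf tau 1 1 (Tsh q i s) - s j * wf tau 1 1 (Tsh q j s))
  = wf tau 1 2 (Tsh q i (Tsh q j s)) *
      (s i * wf tau 1 1 (Tsh q j s) - s j * wf tau 1 1 (Tsh q i s)).
Proof.
move=> hq hnz hquc hp i j s hs.
have ai := Tsh_adm i hq hs; have aj := Tsh_adm j hq hs.
have aij := Tsh_adm i hq aj.
have e11 : s i * tau 1 2 (Tsh q i s) * tau 2 1 (Tsh q j s)
  - s j * tau 1 2 (Tsh q j s) * tau 2 1 (Tsh q i s)
  = (s i - s j) * tau 1 1 (Tsh q i (Tsh q j s)) * tau 2 2 s := hquc i j 1 1 s hs.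
have e22 : s i * tau 2 3 (Tsh q i s) * tau 3 2 (Tsh q j s)
  - s j * tau 2 3 (Tsh q j s) * tau 3 2 (Tsh q i s)
  = (s i - s j) * tau 2 2 (Tsh q i (Tsh q j s)) * tau 3 3 s := hquc i j 2 2 s hs.
have p23 : forall x, admissible x -> tau 2 3 x = tau 2 1 x := fun x hx => (hp 2 1 x hx).2.
have p32 : forall x, admissible x -> tau 3 2 x = tau 1 2 x := fun x hx => (hp 1 2 x hx).1.
have p33 : tau 3 3 s = tau 1 3 s := (hp 1 3 s hs).1.
have p11 : tau 1 1 (Tsh q i (Tsh q j s)) = tau 1 3 (Tsh q i (Tsh q j s)) :=
  esym (hp 1 1 _ aij).2.
rewrite !p23 // !p32 // p33 in e22.
rewrite p11 in e11.
rewrite /wf.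
apply: algE => //; exact: hnz.
Qed.

Lemma E2 (K : numClosedFieldType) (q : K) (tau : int -> int -> (dir -> K) -> K) :
  q != 0 ->
  (forall m n t, admissible t -> tau m n t != 0) ->
  (forall i j m n t, admissible t -> quc_eq q tau i j m n t) ->
  (forall m n t, admissible t ->
     tau (m + 2) n t = tau m n t /\ tau m (n + 2) t = tau m n t) ->
  forall i j s, admissible s ->
  wf tau 1 1 s * (s i * wf tau 1 2 (Tsh q i s) - s j * wf tau 1 2 (Tsh q j s))
  = wf tau 1 1 (Tsh q i (Tsh q j s)) *
      (s i * wf tau 1 2 (Tsh q j s) - s j * wf tau 1 2 (Tsh q i s)).
Proof.
move=> hq hnz hquc hp i j s hs.
have ai := Tsh_adm i hq hs; have aj := Tsh_adm j hq hs.
have aij := Tsh_adm i hq aj.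
have e12 : s i * tau 1 3 (Tsh q i s) * tau 2 2 (Tsh q j s)
  - s j * tau 1 3 (Tsh q j s) * tau 2 2 (Tsh q i s)
  = (s i - s j) * tau 1 2 (Tsh q i (Tsh q j s)) * tau 2 3 s := hquc i j 1 2 s hs.
have e21 : s i * tau 2 2 (Tsh q i s) * tau 3 1 (Tsh q j s)
  - s j * tau 2 2 (Tsh q j s) * tau 3 1 (Tsh q i s)
  = (s i - s j) * tau 2 1 (Tsh q i (Tsh q j s)) * tau 3 2 s := hquc i j 2 1 s hs.
have p31 : forall x, admissible x -> tau 3 1 x = tau 1 3 x.
  by move=> x hx; rewrite (hp 1 1 x hx).1 (hp 1 1 x hx).2.
have p32 : tau 3 2 s = tau 1 2 s := (hp 1 2 s hs).1.
have p23 : tau 2 3 s = tau 2 1 s := (hp 2 1 s hs).2.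
rewrite !p31 // p32 in e21.
rewrite p23 in e12.
rewrite /wf.
apply: algE => //; exact: hnz.
Qed.

Lemma wf_hom (K : numClosedFieldType) (q : K) (tau : int -> int -> (dir -> K) -> K)
  (d : int -> int -> int) :
  q != 0 ->
  (forall m n t, admissible t -> tau m n t != 0) ->
  (forall m n t, admissible t -> tau m n (qscale q t) = q ^ d m n * tau m n t) ->
  forall m n s, admissible s -> wf tau m n (qscale q s) = cc q d m n * wf tau m n s.
Proof.
move=> hq hnz hh m n s hs.
rewrite /wf /cc !hh // expfzDr // -invr_expz.
have h1 := hnz m (n + 1) s hs.
have h2 := expfz_neq0 (d m (n + 1)) hq.
by field; rewrite h1 h2.
Qed.

Lemma wf_nz (K : numClosedFieldType) (tau : int -> int -> (dir -> K) -> K) :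
  (forall m n t, admissible t -> tau m n t != 0) ->
  forall m n s, admissible s -> wf tau m n s != 0.
Proof. by move=> hnz m n s hs; rewrite /wf mulf_neq0 ?invr_eq0 ?hnz. Qed.

Lemma cancel_c (K : fieldType) (a b c : K) : c != 0 -> b != 0 -> c * a / (c * b) = a / b.
Proof. by move=> hc hb; field; rewrite hc hb. Qed.

Ltac atac hq := repeat apply: (Tsh_adm _ hq).

Ltac ptac := apply: functional_extensionality => -[]; rewrite /Tbar /qscale /Tsh /=; field; done.

Theorem mainTheorem6 (K : numClosedFieldType) (q : K)
  (tau : int -> int -> (dir -> K) -> K) (d : int -> int -> int) :
  q != 0 ->
  (* nowhere vanishing *)
  (forall m n t, admissible t -> tau m n t != 0) ->
  (* homogeneity *)
  (forall m n t, admissible t -> tau m n (qscale q t) = q ^ d m n * tau m n t) ->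
  (forall m n, d m n + d (m + 1) (n + 1) = d m (n + 1) + d (m + 1) n) ->
  (* the lattice q-UC hierarchy *)
  (forall i j m n t, admissible t -> quc_eq q tau i j m n t) ->
  (* periodicity *)
  (forall m n t, admissible t ->
     tau (m + 2) n t = tau m n t /\ tau m (n + 2) t = tau m n t) ->
  (forall m n, d (m + 2) n = d m n /\ d m (n + 2) = d m n) ->
  forall t, admissible t ->
    let f := ff q tau 1 1 in
    let g := gf q tau 1 2 in
    let c11 := cc q d 1 1 in
    let c12 := cc q d 1 2 in
    let fb := f (Tbar q t) in
    let gb := g (Tbar q t) in
    ((g t - alpha t) * (beta t * g t - c12) != 0 ->
       fb = c11 / f t * ((alpha t * g t - 1) * (g t - c12 * beta t)
                         / ((g t - alpha t) * (beta t * g t - c12)))) /\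
    ((fb - q * gamma t) * (delta t * fb - c11) != 0 ->
       gb = c12 / g t * ((q * gamma t * fb - 1) * (fb - c11 * delta t)
                         / ((fb - q * gamma t) * (delta t * fb - c11)))).
Proof.
move=> hq hnz hh hd hquc hp hdp t ht.
cbv zeta.
pose pu := Tsh q d1 (Tsh q dm1 (Tsh q dm2 t)).
pose pv := Tsh q dm1 (Tsh q dm1 (Tsh q dm2 t)).
pose pP := Tsh q d1 (Tsh q dm1 (Tsh q dm2 (Tsh q dm1 t))).
pose pQ := Tsh q dm2 (Tsh q dm1 (Tsh q dm1 (Tsh q dm2 t))).
have e_fb1 : Tsh q d1 (Tbar q t) = qscale q pu by rewrite /pu; ptac.
have e_fb2 : Tsh q dm1 (Tbar q t) = qscale q pv by rewrite /pv; ptac.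
have e_gb1 : Tsh q dm1 (Tsh q d1 (Tbar q t)) = qscale q pP by rewrite /pP; ptac.
have e_gb2 : Tsh q dm2 (Tsh q dm1 (Tbar q t)) = qscale q pQ by rewrite /pQ; ptac.
have c1 : Tsh q d1 (Tsh q dm1 t) = Tsh q dm1 (Tsh q d1 t) by ptac.
have c2 : Tsh q d1 (Tsh q dm2 (Tsh q dm1 t)) = pu by rewrite /pu; ptac.
have c3 : Tsh q d2 (Tsh q d1 t) = qscale q (Tsh q dm2 (Tsh q dm1 t)) by ptac.
have c4 : Tsh q d2 (Tsh q dm1 (Tsh q d1 t)) = qscale q pv by rewrite /pv; ptac.
have c5 : Tsh q dm1 (Tsh q dm2 (Tsh q dm1 t)) = pv by rewrite /pv; ptac.
have c6 : Tsh q dm2 (Tsh q dm1 (Tsh q d1 t)) = pu by rewrite /pu; ptac.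
have c7 : Tsh q d2 (Tsh q dm2 (Tsh q dm1 (Tsh q d1 t))) = qscale q pQ by rewrite /pQ; ptac.
have at1 : admissible (Tsh q d1 t) by atac hq.
have atm1 : admissible (Tsh q dm1 t) by atac hq.
have aG1 : admissible (Tsh q dm1 (Tsh q d1 t)) by atac hq.
have aG2 : admissible (Tsh q dm2 (Tsh q dm1 t)) by atac hq.
have apu : admissible pu by rewrite /pu; atac hq.
have apv : admissible pv by rewrite /pv; atac hq.
have apP : admissible pP by rewrite /pP; atac hq.
have apQ : admissible pQ by rewrite /pQ; atac hq.
have hX : forall s, admissible s -> wf tau 1 1 (qscale q s) = cc q d 1 1 * wf tau 1 1 s :=
  @wf_hom K q tau d hq hnz hh 1 1.
have hY : forall s, admissible s -> wf tau 1 2 (qscale q s) = cc q d 1 2 * wf tau 1 2 s :=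
  @wf_hom K q tau d hq hnz hh 1 2.
have nz := @wf_nz K tau hnz.
have hc11 : cc q d 1 1 != 0 by rewrite /cc expfz_neq0.
have hc12 : cc q d 1 2 != 0 by rewrite /cc expfz_neq0.
have R1 := @E2 K q tau hq hnz hquc hp d1 dm2 (Tsh q dm1 t) atm1.
rewrite c1 c2 in R1.
rewrite (_ : Tsh q dm1 t d1 = t d1) // (_ : Tsh q dm1 t dm2 = t dm2) // in R1.
have R2 := @E2 K q tau hq hnz hquc hp d2 dm1 (Tsh q d1 t) at1.
rewrite c3 c4 (hX _ apv) (hY _ aG2) in R2.
rewrite (_ : Tsh q d1 t d2 = t d2) // (_ : Tsh q d1 t dm1 = t dm1) // in R2.
have R3 := @E1 K q tau hq hnz hquc hp d1 dm1 (Tsh q dm2 (Tsh q dm1 t)) aG2.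
rewrite -/pP c2 c5 in R3.
rewrite (_ : Tsh q dm2 (Tsh q dm1 t) d1 = t d1) //
  (_ : Tsh q dm2 (Tsh q dm1 t) dm1 = q^-1 * t dm1) // in R3.
have R4 := @E1 K q tau hq hnz hquc hp d2 dm2 (Tsh q dm1 (Tsh q d1 t)) aG1.
rewrite c7 c4 c6 (hX _ apv) (hY _ apQ) in R4.
rewrite (_ : Tsh q dm1 (Tsh q d1 t) d2 = t d2) //
  (_ : Tsh q dm1 (Tsh q d1 t) dm2 = t dm2) // in R4.
have efb : ff q tau 1 1 (Tbar q t) = wf tau 1 1 pu / wf tau 1 1 pv.
  by rewrite /ff e_fb1 e_fb2 (hX _ apu) (hX _ apv) cancel_c // nz.
have egb : gf q tau 1 2 (Tbar q t) = wf tau 1 2 pP / wf tau 1 2 pQ.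
  by rewrite /gf e_gb1 e_gb2 (hY _ apP) (hY _ apQ) cancel_c // nz.
rewrite efb egb /ff /gf /alpha /beta /gamma /delta.
have tnz := ht.
split=> H.
  by apply: alg1 => //; try exact: ht; apply: nz.
apply: alg2.
all: first [exact: R3 | exact: R4 | exact: H | exact: hq | exact: ht | exact: hc11 | exact: hc12 | (apply: nz; assumption)].
Qed.
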